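(* Let $G$ be a Lindelöf Hausdorff topological group which is $(\omega,\mathfrak c)$-moderate. Then $w(G)\leq|C(G)|\leq\psi(G)^\omega$. Consequently $G$ is $(\tau,\tau^\omega)$-moderate for every cardinal $\tau\geq\omega$.
   Context: $C(G)$ is the set of continuous real-valued functions on $G$; $w$ weight, $\psi$ pseudocharacter, $\mathfrak c=2^\omega$. For infinite cardinals $\kappa\leq\lambda$, a topological group $G$ is $(\kappa,\lambda)$-moderate if every Hausdorff topological group $H$ which is a continuous homomorphic image of $G$ and satisfies $\psi(H)\leq\kappa$ has $w(H)\leq\lambda$. *)

(* Defs.v *)
(* Hausdorff topological groups built from scratch; cardinals
   are handled via types and injections/surjections. *)
From Stdlib Require Import Reals.
From Stdlib Require Import Rtopology.

Record topgroup := TopGroup {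
  carrier :> Type;
  mul : carrier -> carrier -> carrier;
  inv : carrier -> carrier;
  one : carrier;
  opn : (carrier -> Prop) -> Prop;
  mulA : forall x y z, mul x (mul y z) = mul (mul x y) z;
  mul1g : forall x, mul one x = x;
  mulVg : forall x, mul (inv x) x = one;
  opn_full : opn (fun _ => True);
  opn_inter : forall U V, opn U -> opn V -> opn (fun x => U x /\ V x);
  opn_union : forall F : (carrier -> Prop) -> Prop,
      (forall U, F U -> opn U) -> opn (fun x => exists U, F U /\ U x);
  mul_cont : forall W x y, opn W -> W (mul x y) ->
      exists U V, opn U /\ opn V /\ U x /\ V y /\
        (forall a b, U a -> V b -> W (mul a b));
  inv_cont : forall W, opn W -> opn (fun x => W (inv x))
}.

Definition hausdorff (G : topgroup) : Prop :=
  forall x y : G, x <> y ->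
    exists U V, opn G U /\ opn G V /\ U x /\ V y /\ (forall z, ~ (U z /\ V z)).

Definition lindelof (G : topgroup) : Prop :=
  forall (I : Type) (U : I -> G -> Prop),
    (forall i, opn G (U i)) -> (forall x, exists i, U i x) ->
    exists s : nat -> I, forall x, exists n, U (s n) x.

(* B : I -> open sets is a base of G; "w(G) <= |I|" for nonempty I. *)
Definition is_base (G : topgroup) (I : Type) (B : I -> G -> Prop) : Prop :=
  (forall i, opn G (B i)) /\
  (forall U x, opn G U -> U x -> exists i, B i x /\ (forall y, B i y -> U y)).

Definition weight_le (G : topgroup) (I : Type) : Prop :=
  exists B : I -> G -> Prop, is_base G I B.

Definition pseudobase_at (G : topgroup) (K : Type) (x : G) (P : K -> G -> Prop) : Prop :=
  (forall k, opn G (P k)) /\ (forall y, (forall k, P k y) <-> y = x).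

Definition infinite_type (K : Type) : Prop :=
  exists f : nat -> K, forall m n, f m = f n -> m = n.

(* psi(G) <= |K| (psi(G) includes the +omega convention, so K is infinite). *)
Definition pseudochar_le (G : topgroup) (K : Type) : Prop :=
  infinite_type K /\ forall x : G, exists P : K -> G -> Prop, pseudobase_at G K x P.

Definition continuous_map (G H : topgroup) (f : G -> H) : Prop :=
  forall V, opn H V -> opn G (fun x => V (f x)).

Definition is_hom (G H : topgroup) (f : G -> H) : Prop :=
  forall x y, f (mul G x y) = mul H (f x) (f y).

Definition cont_hom_image (G H : topgroup) : Prop :=
  exists f : G -> H, continuous_map G H f /\ is_hom G H f /\
    (forall y : H, exists x, f x = y).

Definition cont_real (G : topgroup) (f : G -> R) : Prop :=
  forall V, open_set V -> opn G (fun x => V (f x)).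

Definition moderate (Kp Lm : Type) (G : topgroup) : Prop :=
  forall H : topgroup, hausdorff H -> cont_hom_image G H ->
    pseudochar_le H Kp -> weight_le H Lm.

(* (omega, c)-moderate: kappa = |nat|, lambda = c = |nat -> bool|. *)
Definition omega_c_moderate (G : topgroup) : Prop :=
  moderate nat (nat -> bool) G.

(* Main.v *)
Require Import Defs.
From Stdlib Require Import Reals Lra Lia Classical ClassicalEpsilon FunctionalExtensionality PropExtensionality ProofIrrelevance List Rtopology Cantor.
Import ListNotations.


Section Basics.
Variable G : topgroup.
Local Notation "x ** y" := (mul G x y) (at level 40, left associativity).
Local Notation e := (one G).
Local Notation iv := (inv G).

Lemma mulgV x : x ** iv x = e.
Proof.
  assert (H : iv (iv x) ** iv x = e) by apply mulVg.
  rewrite <- (mul1g G (x ** iv x)).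
  rewrite <- H at 1.
  rewrite <- mulA. rewrite (mulA G (iv x) x (iv x)). rewrite mulVg, mul1g. exact H.
Qed.

Lemma mulg1 x : x ** e = x.
Proof. rewrite <- (mulVg G x), mulA, mulgV, mul1g. reflexivity. Qed.

Lemma invK x : iv (iv x) = x.
Proof.
  rewrite <- (mulg1 (iv (iv x))), <- (mulVg G x), mulA, mulVg, mul1g. reflexivity.
Qed.

Lemma inv1 : iv e = e.
Proof. rewrite <- (mulg1 (iv e)), mulVg. reflexivity. Qed.

Lemma mulKg x y : iv x ** (x ** y) = y.
Proof. rewrite mulA, mulVg, mul1g; reflexivity. Qed.
Lemma mulKVg x y : x ** (iv x ** y) = y.
Proof. rewrite mulA, mulgV, mul1g; reflexivity. Qed.
Lemma mulgK x y : (y ** x) ** iv x = y.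
Proof. rewrite <- mulA, mulgV, mulg1; reflexivity. Qed.
Lemma mulgKV x y : (y ** iv x) ** x = y.
Proof. rewrite <- mulA, mulVg, mulg1; reflexivity. Qed.

Lemma mul_cancel_l x y z : x ** y = x ** z -> y = z.
Proof. intro H. rewrite <- (mulKg x y), H, mulKg. reflexivity. Qed.

Lemma invM x y : iv (x ** y) = iv y ** iv x.
Proof.
  apply (mul_cancel_l (x ** y)). rewrite mulgV.
  rewrite <- mulA, (mulA G y (iv y)), mulgV, mul1g, mulgV. reflexivity.
Qed.

Lemma open_of_local (S : G -> Prop) :
  (forall z, S z -> exists U, opn G U /\ U z /\ (forall y, U y -> S y)) -> opn G S.
Proof.
  intro H.
  pose (F := fun U : G -> Prop => opn G U /\ (forall y, U y -> S y)).
  assert (HS : S = (fun x => exists U, F U /\ U x)).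
  { apply functional_extensionality; intro x; apply propositional_extensionality; split.
    - intro Hx. destruct (H x Hx) as [U [HU [HUx HUS]]]. exists U. split; [split|]; auto.
    - intros [U [[_ HUS] HUx]]. auto. }
  rewrite HS. apply opn_union. intros U [HU _]. exact HU.
Qed.

Lemma opn_empty : opn G (fun _ => False).
Proof. apply open_of_local. intros z []. Qed.

Lemma opn_ext (S T : G -> Prop) : (forall x, S x <-> T x) -> opn G S -> opn G T.
Proof.
  intros H HS. replace T with S; auto.
  apply functional_extensionality; intro x; apply propositional_extensionality; auto.
Qed.

Lemma opn_rtrans (W : G -> Prop) a : opn G W -> opn G (fun z => W (z ** a)).
Proof.
  intro HW. apply open_of_local. intros z Hz.
  destruct (mul_cont G W z a HW Hz) as [U [V [HU [HV [HUz [HVa HUV]]]]]].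
  exists U. repeat split; auto.
Qed.

Lemma opn_ltrans (W : G -> Prop) a : opn G W -> opn G (fun z => W (a ** z)).
Proof.
  intro HW. apply open_of_local. intros z Hz.
  destruct (mul_cont G W a z HW Hz) as [U [V [HU [HV [HUz [HVa HUV]]]]]].
  exists V. repeat split; auto.
Qed.

Lemma nbhd_cube (V : G -> Prop) : opn G V -> V e ->
  exists W, opn G W /\ W e /\ (forall a, W a -> W (iv a)) /\
    (forall a b c, W a -> W b -> W c -> V (a ** (b ** c))).
Proof.
  intros HV He.
  assert (H1 : V (e ** e)) by (rewrite mul1g; exact He).
  destruct (mul_cont G V e e HV H1) as [A [B [HA [HB [HAe [HBe HAB]]]]]].
  assert (H2 : B (e ** e)) by (rewrite mul1g; exact HBe).
  destruct (mul_cont G B e e HB H2) as [C [D [HC [HD [HCe [HDe HCD]]]]]].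
  pose (W0 := fun x => A x /\ (C x /\ D x)).
  assert (HW0 : opn G W0) by (apply opn_inter; auto; apply opn_inter; auto).
  exists (fun x => W0 x /\ W0 (iv x)). split; [|split; [|split]].
  - apply opn_inter; auto. apply (inv_cont G W0 HW0).
  - rewrite inv1. unfold W0. tauto.
  - intros a [Ha Hia]. rewrite invK. auto.
  - intros a b c [[Ha _] _] [[_ [Hb _]] _] [[_ [_ Hc]] _]. apply HAB; auto.
Qed.

End Basics.

Record good_family (G : topgroup) (J : Type) (F : J -> G -> Prop) : Prop := {
  g_open : forall j, opn G (F j);
  g_e : forall j, F j (one G);
  g_sq : forall j, exists j', (forall a, F j' a -> F j' (inv G a)) /\
     (forall a b c, F j' a -> F j' b -> F j' c -> F j (mul G a (mul G b c)));
  g_conj : forall j x, exists j', forall a, F j' a -> F j (mul G (mul G x a) (inv G x));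
  g_count : exists s : nat -> J, forall j, exists n, s n = j
}.

Section Quot.
Variable G : topgroup.
Local Notation "x ** y" := (mul G x y) (at level 40, left associativity).
Local Notation e := (one G).
Local Notation iv := (inv G).
Variable J : Type.
Variable F : J -> G -> Prop.
Hypothesis gF : good_family G J F.

Definition NN (z : G) : Prop := forall j, F j z.

Lemma NN_e : NN e.
Proof. intro j. apply (g_e _ _ _ gF). Qed.

Lemma F_mul j : exists j', forall a b, F j' a -> F j' b -> F j (a ** b).
Proof.
  destruct (g_sq _ _ _ gF j) as [j' [_ H]]. exists j'. intros a b Ha Hb.
  rewrite <- (mulg1 G b). apply H; auto. apply (g_e _ _ _ gF).
Qed.

Lemma F_inv j : exists j', forall a, F j' a -> F j (iv a).
Proof.
  destruct (g_sq _ _ _ gF j) as [j' [Hs H]]. exists j'. intros a Ha.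
  replace (iv a) with (iv a ** (e ** e)) by (rewrite mul1g, mulg1; reflexivity).
  apply H; auto; apply (g_e _ _ _ gF).
Qed.

Lemma NN_mul a b : NN a -> NN b -> NN (a ** b).
Proof. intros Ha Hb j. destruct (F_mul j) as [j' H]. apply H; auto. Qed.
Lemma NN_inv a : NN a -> NN (iv a).
Proof. intros Ha j. destruct (F_inv j) as [j' H]. apply H; auto. Qed.
Lemma NN_conj x a : NN a -> NN (x ** a ** iv x).
Proof. intros Ha j. destruct (g_conj _ _ _ gF j x) as [j' H]. apply H; auto. Qed.

Definition RR (x y : G) : Prop := NN (iv x ** y).
Definition Q := {P : G -> Prop | exists x, P = RR x}.
Definition cls (x : G) : Q := exist _ (RR x) (ex_intro _ x eq_refl).

Lemma cls_eq x y : cls x = cls y <-> NN (iv x ** y).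
Proof.
  split.
  - intro H. assert (H2 : RR x = RR y) by (apply (f_equal (@proj1_sig _ _) H)).
    change (RR x y). rewrite H2. unfold RR. rewrite mulVg. apply NN_e.
  - intro H. unfold cls. apply subset_eq_compat.
    apply functional_extensionality; intro z; apply propositional_extensionality; unfold RR; split; intro Hz.
    + replace (iv y ** z) with (iv (iv x ** y) ** (iv x ** z)).
      * apply NN_mul; auto. apply NN_inv; auto.
      * rewrite invM, invK, <- mulA, mulKVg. reflexivity.
    + replace (iv x ** z) with ((iv x ** y) ** (iv y ** z)).
      * apply NN_mul; auto.
      * rewrite <- mulA, mulKVg. reflexivity.
Qed.

Definition rep (c : Q) : G := proj1_sig (constructive_indefinite_description _ (proj2_sig c)).

Lemma cls_rep c : cls (rep c) = c.
Proof.
  unfold rep. destruct (constructive_indefinite_description _ (proj2_sig c)) as [x Hx]. simpl.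
  destruct c as [P HP]. unfold cls. apply subset_eq_compat. simpl in Hx. auto.
Qed.

Lemma Q_ind c : exists x, c = cls x.
Proof. exists (rep c). symmetry. apply cls_rep. Qed.

Definition qmul (c d : Q) : Q := cls (rep c ** rep d).
Definition qinv (c : Q) : Q := cls (iv (rep c)).
Definition qone : Q := cls e.

Lemma cls_congr_mul a a' b b' : cls a = cls a' -> cls b = cls b' -> cls (a ** b) = cls (a' ** b').
Proof.
  rewrite !cls_eq. intros Ha Hb. rewrite invM.
  replace (iv b ** iv a ** (a' ** b')) with ((iv b ** (iv a ** a') ** iv (iv b)) ** (iv b ** b')).
  - apply NN_mul; auto. apply NN_conj; auto.
  - rewrite invK. rewrite !mulA. rewrite (mulgK G b). reflexivity.
Qed.

Lemma cls_congr_inv a a' : cls a = cls a' -> cls (iv a) = cls (iv a').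
Proof.
  rewrite !cls_eq. intros Ha. rewrite invK.
  replace (a ** iv a') with (a ** iv (iv a ** a') ** iv a).
  - apply NN_conj. apply NN_inv; auto.
  - rewrite invM, invK, (mulA G a (iv a')), mulgK. reflexivity.
Qed.

Lemma cls_mul x y : qmul (cls x) (cls y) = cls (x ** y).
Proof. unfold qmul. apply cls_congr_mul; apply cls_rep. Qed.
Lemma cls_inv x : qinv (cls x) = cls (iv x).
Proof. unfold qinv. apply cls_congr_inv; apply cls_rep. Qed.

Lemma qmulA x y z : qmul x (qmul y z) = qmul (qmul x y) z.
Proof.
  destruct (Q_ind x) as [a ->]; destruct (Q_ind y) as [b ->]; destruct (Q_ind z) as [c ->].
  rewrite !cls_mul, mulA. reflexivity.
Qed.
Lemma qmul1 x : qmul qone x = x.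
Proof. destruct (Q_ind x) as [a ->]. unfold qone. rewrite cls_mul, mul1g. reflexivity. Qed.
Lemma qmulV x : qmul (qinv x) x = qone.
Proof. destruct (Q_ind x) as [a ->]. rewrite cls_inv, cls_mul, mulVg. reflexivity. Qed.

Definition qopn (O : Q -> Prop) : Prop := opn G (fun x => O (cls x)).

Lemma qopn_full : qopn (fun _ => True).
Proof. apply opn_full. Qed.
Lemma qopn_inter U V : qopn U -> qopn V -> qopn (fun x => U x /\ V x).
Proof. intros; apply opn_inter; auto. Qed.
Lemma qopn_union (FF : (Q -> Prop) -> Prop) :
  (forall U, FF U -> qopn U) -> qopn (fun x => exists U, FF U /\ U x).
Proof.
  intro H. unfold qopn. apply (open_of_local G). intros z [U [HU Hz]].
  exists (fun x => U (cls x)). split; [apply (H U HU)|split; [exact Hz|]]. intros y Hy. exists U; auto.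
Qed.

Definition img (A : G -> Prop) : Q -> Prop := fun c => exists u, A u /\ c = cls u.

Lemma qopn_img A : opn G A -> qopn (img A).
Proof.
  intro HA. unfold qopn, img. apply open_of_local. intros z [u [Hu Hzu]].
  assert (Hk : NN (iv z ** u)) by (apply cls_eq; auto).
  exists (fun y => A (y ** (iv z ** u))). split; [|split].
  - apply opn_rtrans; auto.
  - rewrite mulKVg. auto.
  - intros y Hy. exists (y ** (iv z ** u)). split; auto.
    apply cls_eq. rewrite mulKg. auto.
Qed.

Lemma img_cls A x : A x -> img A (cls x).
Proof. intro H. exists x; auto. Qed.

Lemma qmul_cont : forall W x y, qopn W -> W (qmul x y) ->
      exists U V, qopn U /\ qopn V /\ U x /\ V y /\
        (forall a b, U a -> V b -> W (qmul a b)).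
Proof.
  intros W x y HW Hxy.
  destruct (Q_ind x) as [a ->]; destruct (Q_ind y) as [b ->]. rewrite cls_mul in Hxy.
  destruct (mul_cont G (fun z => W (cls z)) a b HW Hxy) as [U [V [HU [HV [HUa [HVb HUV]]]]]].
  exists (img U), (img V). repeat split; try apply qopn_img; auto; try (apply img_cls; auto).
  intros c d [u [Hu ->]] [v [Hv ->]]. rewrite cls_mul. apply HUV; auto.
Qed.

Lemma qinv_cont : forall W, qopn W -> qopn (fun x => W (qinv x)).
Proof.
  intros W HW. unfold qopn. apply (opn_ext G (fun x => W (cls (iv x)))).
  - intro x. rewrite cls_inv. tauto.
  - apply (inv_cont G (fun x => W (cls x)) HW).
Qed.

Definition quot : topgroup := {|
  carrier := Q; mul := qmul; inv := qinv; one := qone; opn := qopn;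
  mulA := qmulA; mul1g := qmul1; mulVg := qmulV; opn_full := qopn_full;
  opn_inter := qopn_inter; opn_union := qopn_union; mul_cont := qmul_cont;
  inv_cont := qinv_cont |}.

Lemma quot_hausdorff : hausdorff quot.
Proof.
  intros c d Hcd. simpl in c, d.
  destruct (Q_ind c) as [x ->]; destruct (Q_ind d) as [y ->].
  assert (Hn : ~ NN (iv x ** y)) by (intro H; apply Hcd; apply cls_eq; auto).
  apply not_all_ex_not in Hn. destruct Hn as [j Hj].
  destruct (g_sq _ _ _ gF j) as [j' [Hs Hc]].
  exists (img (fun z => F j' (iv x ** z))), (img (fun z => F j' (iv y ** z))).
  split; [|split; [|split; [|split]]].
  - apply qopn_img. apply opn_ltrans. apply (g_open _ _ _ gF).
  - apply qopn_img. apply opn_ltrans. apply (g_open _ _ _ gF).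
  - apply img_cls. rewrite mulVg. apply (g_e _ _ _ gF).
  - apply img_cls. rewrite mulVg. apply (g_e _ _ _ gF).
  - intros z [[u [Hu ->]] [v [Hv Huv]]]. apply Hj.
    apply cls_eq in Huv.
    replace (iv x ** y) with ((iv x ** u) ** ((iv u ** v) ** iv (iv y ** v))).
    + apply Hc; auto.
    + rewrite invM, invK, <- !mulA, !mulKVg. reflexivity.
Qed.

Lemma quot_pseudo : pseudochar_le quot nat.
Proof.
  split.
  - exists (fun n => n). auto.
  - intro c. simpl in c. destruct (Q_ind c) as [x ->].
    destruct (g_count _ _ _ gF) as [s Hs].
    exists (fun n => img (fun z => F (s n) (iv x ** z))). split.
    + intro n. apply qopn_img. apply opn_ltrans. apply (g_open _ _ _ gF).
    + intro d. simpl in d. split.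
      * intro H. destruct (Q_ind d) as [z ->]. apply cls_eq.
        intro j. destruct (g_sq _ _ _ gF j) as [j' [Hsy Hc]].
        destruct (Hs j') as [n Hn].
        destruct (H n) as [u [Hu Hzu]]. rewrite Hn in Hu.
        apply cls_eq in Hzu.
        replace (iv z ** x) with ((iv z ** u) ** (iv (iv x ** u) ** e)).
        -- apply Hc; [apply Hzu | apply Hsy; exact Hu | apply (g_e _ _ _ gF)].
        -- rewrite mulg1, invM, invK, <- !mulA, !mulKVg. reflexivity.
      * intros -> n. apply img_cls. rewrite mulVg. apply (g_e _ _ _ gF).
Qed.

Lemma quot_image : cont_hom_image G quot.
Proof.
  exists cls. split; [|split].
  - intros V HV. exact HV.
  - intros x y. simpl. symmetry. apply cls_mul.
  - intro y. destruct (Q_ind y) as [x ->]. exists x; auto.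
Qed.

End Quot.

Lemma NN_compl_open (G : topgroup) J F (gF : good_family G J F) :
  opn G (fun z => ~ NN G J F z).
Proof.
  apply open_of_local. intros z Hz.
  apply not_all_ex_not in Hz. destruct Hz as [j Hj].
  destruct (g_sq _ _ _ gF j) as [j' [Hs Hc]].
  exists (fun y => F j' (mul G (inv G z) y)). split; [|split].
  - apply opn_ltrans. apply (g_open _ _ _ gF).
  - simpl. rewrite mulVg. apply (g_e _ _ _ gF).
  - intros y Hy HN. apply Hj.
    replace z with (mul G y (mul G (inv G (mul G (inv G z) y)) (one G))).
    + apply Hc; auto. apply (g_e _ _ _ gF).
    + rewrite mulg1, invM, invK, mulKVg. reflexivity.
Qed.

Fixpoint lcode (l : list nat) : nat :=
  match l with [] => 0 | x :: l' => S (Cantor.to_nat (x, lcode l')) end.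
Fixpoint ldec (fuel m : nat) : list nat :=
  match fuel with 0 => [] | S f =>
    match m with 0 => [] | S m' => fst (Cantor.of_nat m') :: ldec f (snd (Cantor.of_nat m')) end end.

Lemma ldec_lcode l : forall f, lcode l <= f -> ldec f (lcode l) = l.
Proof.
  induction l as [|x l IH]; intros f Hf.
  - destruct f; reflexivity.
  - simpl in Hf. destruct f as [|f]; [lia|]. cbn [ldec lcode]. rewrite Cantor.cancel_of_to. cbn [fst snd].
    rewrite IH; auto. pose proof (Cantor.to_nat_non_decreasing x (lcode l)). lia.
Qed.

Definition ldecode (n : nat) : list nat := ldec n n.
Lemma ldecode_surj l : exists n, ldecode n = l.
Proof. exists (lcode l). apply ldec_lcode. auto. Qed.

Section Guran.
Variable G : topgroup.
Local Notation "x ** y" := (mul G x y) (at level 40, left associativity).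
Local Notation e := (one G).
Local Notation iv := (inv G).
Hypothesis HL : lindelof G.

Lemma narrow_conj (V : G -> Prop) : opn G V -> V e ->
  exists c : nat -> G -> Prop, (forall i, opn G (c i) /\ c i e) /\
    forall x, exists i, forall a, c i a -> V (x ** a ** iv x).
Proof.
  intros HV He. destruct (nbhd_cube G V HV He) as [W [HW [HWe [HWs HWc]]]].
  destruct (HL G (fun s x => W (x ** iv s))) as [sq Hsq].
  - intro s. apply opn_rtrans; auto.
  - intro x. exists x. rewrite mulgV. auto.
  - exists (fun n a => W (sq n ** a ** iv (sq n))). split.
    + intro i. split.
      * apply (opn_ltrans G (fun y => W (y ** iv (sq i)))). apply opn_rtrans; auto.
      * rewrite mulg1, mulgV. auto.
    + intro x. destruct (Hsq x) as [n Hn]. exists n. intros a Ha.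
      replace (x ** a ** iv x) with ((x ** iv (sq n)) ** ((sq n ** a ** iv (sq n)) ** iv (x ** iv (sq n)))).
      * apply HWc; auto.
      * rewrite invM, invK, <- !mulA, !mulKg. reflexivity.
Qed.

Lemma sq_ex (V : G -> Prop) : exists W : G -> Prop, opn G V /\ V e ->
  opn G W /\ W e /\ (forall a, W a -> W (iv a)) /\
    (forall a b c, W a -> W b -> W c -> V (a ** (b ** c))).
Proof.
  destruct (classic (opn G V /\ V e)) as [[H1 H2]|H].
  - destruct (nbhd_cube G V H1 H2) as [W HW]. exists W. auto.
  - exists V. tauto.
Qed.

Definition sqf (V : G -> Prop) : G -> Prop := proj1_sig (constructive_indefinite_description _ (sq_ex V)).
Lemma sqf_spec V : opn G V -> V e ->
  opn G (sqf V) /\ sqf V e /\ (forall a, sqf V a -> sqf V (iv a)) /\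
    (forall a b c, sqf V a -> sqf V b -> sqf V c -> V (a ** (b ** c))).
Proof. intros. unfold sqf. destruct (constructive_indefinite_description _ (sq_ex V)) as [W HW]. simpl. auto. Qed.

Lemma cf_ex (V : G -> Prop) : exists c : nat -> G -> Prop, opn G V /\ V e ->
  (forall i, opn G (c i) /\ c i e) /\ forall x, exists i, forall a, c i a -> V (x ** a ** iv x).
Proof.
  destruct (classic (opn G V /\ V e)) as [[H1 H2]|H].
  - destruct (narrow_conj V H1 H2) as [c Hc]. exists c. auto.
  - exists (fun _ => V). tauto.
Qed.

Definition cf (V : G -> Prop) : nat -> G -> Prop := proj1_sig (constructive_indefinite_description _ (cf_ex V)).
Lemma cf_spec V : opn G V -> V e ->
  (forall i, opn G (cf V i) /\ cf V i e) /\ forall x, exists i, forall a, cf V i a -> V (x ** a ** iv x).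
Proof. intros. unfold cf. destruct (constructive_indefinite_description _ (cf_ex V)) as [c Hc]. simpl. auto. Qed.

Fixpoint FF (U : G -> Prop) (l : list nat) : G -> Prop :=
  match l with
  | [] => U
  | 0 :: l' => sqf (FF U l')
  | S i :: l' => cf (FF U l') i
  end.

Lemma FF_nbhd U : opn G U -> U e -> forall l, opn G (FF U l) /\ FF U l e.
Proof.
  intros HU He l. induction l as [|[|i] l IH]; simpl; auto.
  - destruct IH as [H1 H2]. destruct (sqf_spec _ H1 H2) as [A [B _]]. auto.
  - destruct IH as [H1 H2]. destruct (cf_spec _ H1 H2) as [A _]. apply A.
Qed.

Lemma FF_good U : opn G U -> U e -> good_family G (list nat) (FF U).
Proof.
  intros HU He. constructor.
  - intro j. apply (FF_nbhd U HU He).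
  - intro j. apply (FF_nbhd U HU He).
  - intro j. exists (0 :: j). simpl. destruct (FF_nbhd U HU He j) as [H1 H2].
    destruct (sqf_spec _ H1 H2) as [_ [_ [A B]]]. auto.
  - intros j x. destruct (FF_nbhd U HU He j) as [H1 H2].
    destruct (cf_spec _ H1 H2) as [_ A]. destruct (A x) as [i Hi]. exists (S i :: j). simpl. auto.
  - exists ldecode. apply ldecode_surj.
Qed.

End Guran.

Lemma Fa_good (G : topgroup) (HL : lindelof G) K (P : K -> G -> Prop)
  (HP : forall k, opn G (P k) /\ P k (one G)) (a : nat -> K) :
  good_family G (nat * list nat) (fun p => FF G HL (P (a (fst p))) (snd p)).
Proof.
  assert (Hg : forall n, good_family G (list nat) (FF G HL (P (a n)))).
  { intro n. destruct (HP (a n)). apply FF_good; auto. }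
  constructor.
  - intros [n l]. apply (g_open _ _ _ (Hg n)).
  - intros [n l]. apply (g_e _ _ _ (Hg n)).
  - intros [n l]. destruct (g_sq _ _ _ (Hg n) l) as [l' H]. exists (n, l'). exact H.
  - intros [n l] x. destruct (g_conj _ _ _ (Hg n) l x) as [l' H]. exists (n, l'). exact H.
  - exists (fun m => (fst (Cantor.of_nat m), ldecode (snd (Cantor.of_nat m)))).
    intros [n l]. exists (Cantor.to_nat (n, lcode l)). rewrite Cantor.cancel_of_to. simpl.
    unfold ldecode. rewrite ldec_lcode; auto.
Qed.

Theorem weight_bound (G : topgroup) : lindelof G -> omega_c_moderate G ->
  forall K, pseudochar_le G K ->
  exists B : (nat -> K) * (nat -> bool) -> G -> Prop, is_base G _ B.
Proof.
  intros HL HM K [[iota Hiota] Hps].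
  destruct (Hps (one G)) as [P [HPo HPe]].
  assert (HP : forall k, opn G (P k) /\ P k (one G)).
  { intro k. split; auto. apply (proj2 (HPe (one G)) eq_refl). }
  pose (Fa := fun (a : nat -> K) (p : nat * list nat) => FF G HL (P (a (fst p))) (snd p)).
  assert (Hmod : forall a, weight_le (quot G _ (Fa a) (Fa_good G HL K P HP a)) (nat -> bool)).
  { intro a. apply HM.
    - apply quot_hausdorff.
    - apply quot_image.
    - apply quot_pseudo. }
  pose (Bsel := fun a => proj1_sig (constructive_indefinite_description _ (Hmod a))).
  assert (Hspec : forall a, is_base _ _ (Bsel a)).
  { intro a. unfold Bsel. destruct (constructive_indefinite_description _ (Hmod a)) as [B HB]. exact HB. }
  exists (fun p z => Bsel (fst p) (snd p) (cls G _ (Fa (fst p)) z)). split.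
  - intros [a t]. exact (proj1 (Hspec a) t).
  - intros U x HU Hx.
    assert (HU' : opn G (fun z => U (mul G x z))) by (apply opn_ltrans; auto).
    assert (HUe : U (mul G x (one G))) by (rewrite mulg1; auto).
    destruct (nbhd_cube G _ HU' HUe) as [W [HW [HWe [HWs HWc]]]].
    destruct (HL (option K) (fun o => match o with None => W
                  | Some k => fun z => ~ NN G _ (FF G HL (P k)) z end)) as [s Hs].
    + intros [k|]; auto. apply NN_compl_open with (F := FF G HL (P k)).
      destruct (HP k). apply FF_good; auto.
    + intro z. destruct (classic (W z)) as [Hz|Hz]; [exists None; auto|].
      assert (Hne : ~ (forall k, P k z)).
      { intro H. apply (proj1 (HPe z)) in H. subst. auto. }
      apply not_all_ex_not in Hne. destruct Hne as [k Hk]. exists (Some k).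
      intro HN. apply Hk. exact (HN []).
    + pose (a := fun n => match s n with Some k => k | None => iota 0 end).
      assert (Hclaim : forall z, NN G _ (Fa a) z -> W z).
      { intros z Hz. destruct (Hs z) as [n Hn]. destruct (s n) as [k|] eqn:E; auto.
        exfalso. apply Hn. intro l. specialize (Hz (n, l)). unfold Fa, a in Hz. simpl in Hz.
        rewrite E in Hz. exact Hz. }
      pose (gA := Fa_good G HL K P HP a).
      assert (HO : opn (quot G _ (Fa a) gA) (img G _ (Fa a) (fun z => W (mul G (inv G x) z)))).
      { exact (qopn_img G _ (Fa a) gA _ (opn_ltrans G W (inv G x) HW)). }
      assert (HOx : img G _ (Fa a) (fun z => W (mul G (inv G x) z)) (cls G _ (Fa a) x)).
      { apply img_cls. rewrite mulVg. auto. }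
      destruct (proj2 (Hspec a) _ (cls G _ (Fa a) x) HO HOx) as [t [Ht1 Ht2]].
      exists (a, t). simpl. split; auto.
      intros z Hz. apply Ht2 in Hz. destruct Hz as [u [Hu Hzu]].
      apply (cls_eq G _ _ gA) in Hzu.
      replace z with (mul G x (mul G (mul G (inv G x) u) (mul G (inv G (mul G (inv G z) u)) (one G)))).
      * apply HWc; auto.
      * rewrite mulg1, invM, invK, <- !mulA, !mulKVg. reflexivity.
Qed.

Open Scope R_scope.
Definition hh (n : nat) : R := (/2)^n.
Lemma hh_pos n : 0 < hh n.
Proof. unfold hh. apply pow_lt. lra. Qed.
Lemma hh_S n : hh (S n) = hh n / 2.
Proof. unfold hh. simpl. lra. Qed.
Lemma hh_anti n m : (n <= m)%nat -> hh m <= hh n.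
Proof.
  intro H. induction H; [lra|]. rewrite hh_S. pose proof (hh_pos m). lra.
Qed.
Lemma hh_lt n m : hh n < hh m -> (m < n)%nat.
Proof. intro H. destruct (Nat.lt_ge_cases m n); auto. apply hh_anti in H0. lra. Qed.

Section Kak.
Variable G : topgroup.
Local Notation "x ** y" := (mul G x y) (at level 40, left associativity).
Local Notation e := (one G).
Local Notation iv := (inv G).
Variable Ws : nat -> G -> Prop.
Hypothesis HWo : forall n, opn G (Ws n).
Hypothesis HWe : forall n, Ws n e.
Hypothesis HWs : forall n a, Ws (S n) a -> Ws (S n) (iv a).
Hypothesis HWc : forall n a b c, Ws (S n) a -> Ws (S n) b -> Ws (S n) c -> Ws n (a ** (b ** c)).

Lemma Ws_mono n a : Ws (S n) a -> Ws n a.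
Proof. intro H. replace a with (a ** (e ** e)) by (rewrite mul1g, mulg1; reflexivity). apply HWc; auto. Qed.
Lemma Ws_anti n m a : (n <= m)%nat -> Ws m a -> Ws n a.
Proof. intros H. induction H; auto. intro Ha. apply IHle. apply Ws_mono. auto. Qed.

Definition prodl (l : list (nat * G)) : G := fold_right (fun p acc => snd p ** acc) e l.
Definition suml (l : list (nat * G)) : R := fold_right (fun p acc => hh (fst p) + acc) 0 l.
Definition validl (l : list (nat * G)) : Prop := Forall (fun p => Ws (fst p) (snd p)) l.

Lemma suml_ge0 l : 0 <= suml l.
Proof. induction l as [|p l IH]; simpl; [lra|]. pose proof (hh_pos (fst p)). lra. Qed.
Lemma suml_app l1 l2 : suml (l1 ++ l2) = suml l1 + suml l2.
Proof. induction l1 as [|p l IH]; simpl; [lra|]. rewrite IH. lra. Qed.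
Lemma prodl_app l1 l2 : prodl (l1 ++ l2) = prodl l1 ** prodl l2.
Proof. induction l1 as [|p l IH]; simpl. - rewrite mul1g; auto. - unfold prodl in *. simpl. rewrite IH, mulA. auto. Qed.

Lemma split_ex l : l <> [] -> forall h, 0 < h -> exists l1 n w l2,
  l = l1 ++ (n, w) :: l2 /\ suml l1 < h /\ (l2 = [] \/ h <= suml l1 + hh n).
Proof.
  induction l as [|[n w] l IH]; intros Hl h Hh; [congruence|].
  destruct l as [|p l'].
  - exists [], n, w, []. simpl. auto.
  - destruct (Rle_lt_dec h (hh n)) as [H1|H1].
    + exists [], n, w, (p :: l'). simpl. split; auto. split; auto. right; lra.
    + destruct (IH ltac:(congruence) (h - hh n) ltac:(lra)) as [l1 [m [v [l2 [E1 [E2 E3]]]]]].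
      exists ((n, w) :: l1), m, v, l2. simpl. rewrite E1. split; auto. split; [lra|].
      destruct E3; [left; auto | right; lra].
Qed.

Lemma kakutani : forall N l, (length l <= N)%nat -> validl l -> forall m, suml l < hh m -> Ws m (prodl l).
Proof.
  induction N as [|N IH]; intros l Hlen Hv m Hs.
  - destruct l; [apply HWe | simpl in Hlen; lia].
  - destruct l as [|p0 l0] eqn:El; [apply HWe|]. rewrite <- El in *.
    assert (Hne : l <> []) by (rewrite El; congruence).
    destruct (split_ex l Hne (hh (S m)) (hh_pos _)) as [l1 [n [w [l2 [E1 [E2 E3]]]]]].
    rewrite E1 in Hv, Hlen, Hs |- *. rewrite suml_app in Hs. simpl in Hs.
    rewrite prodl_app. simpl.
    apply Forall_app in Hv. destruct Hv as [Hv1 Hv2]. inversion Hv2; subst. simpl in *.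
    rewrite length_app in Hlen. simpl in Hlen.
    pose proof (suml_ge0 l1). pose proof (suml_ge0 l2).
    assert (Hm : hh (S m) * 2 = hh m) by (rewrite hh_S; lra).
    apply HWc.
    + apply (IH l1); auto; lia.
    + apply (Ws_anti (S m) n); auto. apply hh_lt. lra.
    + apply (IH l2); auto; [lia|]. destruct E3 as [->|E3]; simpl; [apply hh_pos|lra].
Qed.

Definition Sz (z : G) (s : R) : Prop := s = 1 \/ exists l, validl l /\ prodl l = z /\ suml l = s.

Lemma Sz_ge0 z s : Sz z s -> 0 <= s.
Proof. intros [->|[l [_ [_ <-]]]]; [lra|apply suml_ge0]. Qed.

Lemma Sz_bound z : bound (fun t => Sz z (- t)).
Proof. exists 0. intros t Ht. pose proof (Sz_ge0 z _ Ht). lra. Qed.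
Lemma Sz_ne z : exists t, Sz z (- t).
Proof. exists (-1). left. lra. Qed.

Definition NK (z : G) : R := - proj1_sig (completeness _ (Sz_bound z) (Sz_ne z)).

Lemma NK_lb z s : Sz z s -> NK z <= s.
Proof.
  intro H. unfold NK. destruct (completeness _ _ _) as [m [Hm1 Hm2]]. simpl.
  assert (Hm : - s <= m) by (apply Hm1; rewrite Ropp_involutive; auto). lra.
Qed.

Lemma NK_glb z c : (forall s, Sz z s -> c <= s) -> c <= NK z.
Proof.
  intro H. unfold NK. destruct (completeness _ _ _) as [m [Hm1 Hm2]]. simpl.
  assert (m <= - c). { apply Hm2. intros t Ht. apply H in Ht. lra. } lra.
Qed.

Lemma NK_ge0 z : 0 <= NK z.
Proof. apply NK_glb. apply Sz_ge0. Qed.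

Lemma NK_e : NK e = 0.
Proof.
  apply Rle_antisym; [|apply NK_ge0]. apply NK_lb. right. exists []. split; [constructor|]. simpl. auto.
Qed.

Lemma NK_W n w : Ws n w -> NK w <= hh n.
Proof.
  intro H. apply NK_lb. right. exists [(n, w)]. split; [constructor; auto|]. simpl. split; [apply mulg1|lra].
Qed.

Lemma NK_sub a b : NK (a ** b) <= NK a + NK b.
Proof.
  assert (Hst : forall s t, Sz a s -> Sz b t -> NK (a ** b) <= s + t).
  { intros s t Hs Ht. pose proof (Sz_ge0 _ _ Hs). pose proof (Sz_ge0 _ _ Ht).
    assert (H1 : NK (a ** b) <= 1) by (apply NK_lb; left; auto).
    destruct Hs as [->|[l1 [Hv1 [Hp1 Hs1]]]]; [lra|].
    destruct Ht as [->|[l2 [Hv2 [Hp2 Hs2]]]]; [lra|].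
    apply NK_lb. right. exists (l1 ++ l2). split; [apply Forall_app; auto|].
    rewrite prodl_app, suml_app. subst. auto. }
  assert (H2 : forall t, Sz b t -> NK (a ** b) - t <= NK a).
  { intros t Ht. apply NK_glb. intros s Hs. pose proof (Hst s t Hs Ht). lra. }
  assert (H3 : NK (a ** b) - NK a <= NK b).
  { apply NK_glb. intros t Ht. pose proof (H2 t Ht). lra. }
  lra.
Qed.

Lemma NK_small z : NK z < 1 -> Ws 0 z.
Proof.
  intro H. destruct (classic (exists s, Sz z s /\ s < 1)) as [[s [Hs Hs1]]|Hn].
  - destruct Hs as [->|[l [Hv [<- Hl]]]]; [lra|]. apply (kakutani (length l)); auto. unfold hh. simpl. lra.
  - exfalso. assert (1 <= NK z). { apply NK_glb. intros s Hs. destruct (Rlt_le_dec s 1); auto. exfalso; eauto. } lra.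
Qed.

Lemma NK_cont z (d : R) : 0 < d -> exists n, forall w, Ws n w -> Rabs (NK (z ** w) - NK z) < d.
Proof.
  intro Hd. destruct (pow_lt_1_zero (/2) ltac:(rewrite Rabs_pos_eq; lra) d Hd) as [N HN].
  exists (S N). intros w Hw.
  assert (Hh : hh (S N) < d). { unfold hh. specialize (HN (S N) ltac:(lia)). rewrite Rabs_pos_eq in HN; auto. apply pow_le; lra. }
  pose proof (NK_W _ _ Hw). pose proof (NK_W _ _ (HWs _ _ Hw)).
  pose proof (NK_sub z w). pose proof (NK_sub (z ** w) (iv w)).
  rewrite <- mulA, mulgV, mulg1 in H2.
  apply Rabs_def1; lra.
Qed.

End Kak.

Fixpoint Wseq (G : topgroup) (W0 : G -> Prop) (n : nat) : G -> Prop :=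
  match n with 0 => W0 | S n' => sqf G (Wseq G W0 n') end.

Lemma Wseq_nbhd G W0 : opn G W0 -> W0 (one G) -> forall n, opn G (Wseq G W0 n) /\ Wseq G W0 n (one G).
Proof.
  intros H1 H2 n. induction n as [|n [IH1 IH2]]; simpl; auto.
  destruct (sqf_spec G _ IH1 IH2) as [A [B _]]. auto.
Qed.

Lemma open_pos : open_set (fun r => 0 < r).
Proof.
  intros r Hr. exists (mkposreal r Hr). intros y Hy. unfold disc in Hy. simpl in Hy.
  apply Rabs_def2 in Hy. lra.
Qed.

Theorem cozero_base (G : topgroup) :
  exists B : {f : G -> R | cont_real G f} -> G -> Prop, is_base G _ B.
Proof.
  exists (fun f z => 0 < proj1_sig f z). split.
  - intros [f Hf]. simpl. apply (Hf _ open_pos).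
  - intros U x HU Hx.
    pose (W0 := fun z => U (mul G x z)).
    assert (HW0 : opn G W0) by (apply opn_ltrans; auto).
    assert (HW0e : W0 (one G)) by (unfold W0; rewrite mulg1; auto).
    pose (Ws := Wseq G W0).
    assert (HWo : forall n, opn G (Ws n)) by (intro n; apply (Wseq_nbhd G W0 HW0 HW0e n)).
    assert (HWe : forall n, Ws n (one G)) by (intro n; apply (Wseq_nbhd G W0 HW0 HW0e n)).
    assert (HWs : forall n a, Ws (S n) a -> Ws (S n) (inv G a)).
    { intros n a. simpl. destruct (sqf_spec G _ (HWo n) (HWe n)) as [_ [_ [A _]]]. apply A. }
    assert (HWc : forall n a b c, Ws (S n) a -> Ws (S n) b -> Ws (S n) c -> Ws n (mul G a (mul G b c))).
    { intros n. simpl. destruct (sqf_spec G _ (HWo n) (HWe n)) as [_ [_ [_ A]]]. apply A. }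
    pose (g := fun z => 1 - NK G Ws (mul G (inv G x) z)).
    assert (Hg : cont_real G g).
    { intros V HV. apply open_of_local. intros z Hz.
      destruct (HV _ Hz) as [d Hd].
      destruct (NK_cont G Ws HWs (mul G (inv G x) z) d (cond_pos d)) as [n Hn].
      exists (fun y => Ws n (mul G (inv G z) y)). split; [|split].
      - apply opn_ltrans; auto.
      - simpl. rewrite mulVg. auto.
      - intros y Hy. apply Hd. unfold disc. specialize (Hn _ Hy).
        rewrite mulA, <- (mulA G (inv G x) z), mulgV, mulg1 in Hn.
        unfold g. replace (1 - NK G Ws (mul G (inv G x) y) - (1 - NK G Ws (mul G (inv G x) z)))
          with (- (NK G Ws (mul G (inv G x) y) - NK G Ws (mul G (inv G x) z))) by ring.
        rewrite Rabs_Ropp. exact Hn. }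
    exists (exist _ g Hg). simpl. split.
    + unfold g. rewrite mulVg, NK_e; auto. lra.
    + intros y Hy. unfold g in Hy.
      assert (H : NK G Ws (mul G (inv G x) y) < 1) by lra.
      apply (NK_small G Ws HWe HWc) in H. change (U (mul G x (mul G (inv G x) y))) in H. rewrite mulKVg in H. exact H.
Qed.

Lemma tri a b c : Rabs (a - c) <= Rabs (a - b) + Rabs (b - c).
Proof. replace (a - c) with ((a - b) + (b - c)) by ring. apply Rabs_triang. Qed.

Lemma open_far q r : open_set (fun t => r < Rabs (t - q)).
Proof.
  intros t Ht. assert (Hd : 0 < Rabs (t - q) - r) by lra.
  exists (mkposreal _ Hd). intros y Hy. unfold disc in Hy. simpl in Hy.
  pose proof (tri t y q). rewrite Rabs_minus_sym in Hy. lra.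
Qed.

Lemma open_near q r : open_set (fun t => Rabs (t - q) < r).
Proof.
  intros t Ht. assert (Hd : 0 < r - Rabs (t - q)) by lra.
  exists (mkposreal _ Hd). intros y Hy. unfold disc in Hy. simpl in Hy.
  pose proof (tri y t q). lra.
Qed.

Definition ctr (i : nat * nat * nat) : R :=
  match i with (k1, k2, m) => (INR k1 - INR k2) * hh m end.
Definition rad (i : nat * nat * nat) : R := match i with (_, _, m) => hh m end.

Section Code.
Variable G : topgroup.
Variable J : Type.
Variable Bas : J -> G -> Prop.
Hypothesis HB : is_base G J Bas.
Hypothesis HL : lindelof G.

Definition code_prop (f : G -> R) (i : nat * nat * nat) (c : nat -> option J) : Prop :=
  (forall n j, c n = Some j -> forall y, Bas j y -> Rabs (f y - ctr i) < 2 * rad i) /\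
  (forall z, Rabs (f z - ctr i) <= rad i -> exists n j, c n = Some j /\ Bas j z).

Lemma code_ex f i : cont_real G f -> exists c, code_prop f i c.
Proof.
  intro Hf. unfold code_prop. set (q := ctr i). set (r := rad i).
  destruct (HL (option J) (fun o => match o with
     | None => fun z => r < Rabs (f z - q)
     | Some j => fun z => Bas j z /\ (forall y, Bas j y -> Rabs (f y - q) < 2 * r) end)) as [s Hs].
  - intros [j|].
    + apply open_of_local. intros z [Hz Hj]. exists (Bas j). split; [apply (proj1 HB)|]. split; auto.
    + apply (Hf _ (open_far q r)).
  - intro z. destruct (Rlt_le_dec r (Rabs (f z - q))) as [H|H]; [exists None; auto|].
    assert (Hr : 0 < r) by (unfold r, rad; destruct i as [[? ?] ?]; apply hh_pos).
    destruct (proj2 HB (fun y => Rabs (f y - q) < 2 * r) z (Hf _ (open_near q (2 * r))) ltac:(lra))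
      as [j [Hj1 Hj2]].
    exists (Some j). auto.
  - exists (fun n => match s n with
       | Some j => if excluded_middle_informative (forall y, Bas j y -> Rabs (f y - q) < 2 * r)
                   then Some j else None
       | None => None end).
    split.
    + intros n j. destruct (s n) as [j'|]; [|congruence].
      destruct (excluded_middle_informative _) as [Hi|Hi]; [|congruence]. intro E. inversion E; subst. auto.
    + intros z Hz. destruct (Hs z) as [n Hn]. exists n.
      destruct (s n) as [j|]; [|simpl in Hn; lra].
      destruct Hn as [Hn1 Hn2]. exists j.
      destruct (excluded_middle_informative _) as [Hi|Hi]; [auto|contradiction].
Qed.

Lemma code_ex' f i : exists c, cont_real G f -> code_prop f i c.
Proof.
  destruct (classic (cont_real G f)) as [H|H].
  - destruct (code_ex f i H) as [c Hc]. exists c. auto.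
  - exists (fun _ => None). tauto.
Qed.

Definition codeF (f : G -> R) (i : nat * nat * nat) : nat -> option J :=
  proj1_sig (constructive_indefinite_description _ (code_ex' f i)).

Lemma codeF_spec f i : cont_real G f -> code_prop f i (codeF f i).
Proof. unfold codeF. destruct (constructive_indefinite_description _ _) as [c Hc]. simpl. auto. Qed.

Lemma IZR_split (K : Z) : IZR K = INR (Z.to_nat K) - INR (Z.to_nat (- K)).
Proof. rewrite !INR_IZR_INZ, <- minus_IZR. f_equal. lia. Qed.

Lemma codeF_inj f g : cont_real G f -> cont_real G g -> codeF f = codeF g -> f = g.
Proof.
  intros Hf Hg E. apply functional_extensionality. intro z.
  destruct (Req_dec (f z) (g z)) as [H|H]; auto. exfalso.
  assert (Hd : 0 < Rabs (f z - g z) / 3).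
  { assert (0 < Rabs (f z - g z)) by (apply Rabs_pos_lt; lra). lra. }
  destruct (pow_lt_1_zero (/2) ltac:(rewrite Rabs_pos_eq; lra) _ Hd) as [m Hm].
  specialize (Hm m (le_n m)). rewrite Rabs_pos_eq in Hm by (apply pow_le; lra).
  fold (hh m) in Hm. pose proof (hh_pos m) as Hh.
  set (K := up (f z / hh m)).
  destruct (archimed (f z / hh m)) as [A1 A2]. fold K in A1, A2.
  set (i := (Z.to_nat K, Z.to_nat (- K), m)).
  assert (Hc : ctr i = IZR K * hh m) by (unfold i, ctr; rewrite (IZR_split K); auto).
  assert (Hfz : Rabs (f z - ctr i) <= rad i).
  { rewrite Hc. unfold i, rad.
    assert (Hq : f z = (f z / hh m) * hh m) by (field; lra).
    rewrite Hq. replace (f z / hh m * hh m - IZR K * hh m) with (- ((IZR K - f z / hh m) * hh m)) by ring.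
    rewrite Rabs_Ropp, Rabs_mult, (Rabs_pos_eq (hh m)) by lra.
    rewrite Rabs_pos_eq by lra. nra. }
  destruct (proj2 (codeF_spec f i Hf) z Hfz) as [n [j [Hn Hj]]].
  rewrite E in Hn. pose proof (proj1 (codeF_spec g i Hg) n j Hn z Hj) as Hgz.
  unfold rad, i in Hfz, Hgz. pose proof (tri (f z) (ctr i) (g z)).
  rewrite (Rabs_minus_sym (ctr i) (g z)) in H0. unfold i in H0. lra.
Qed.

End Code.

Definition enc3 (x : nat * nat * nat) : nat := match x with (a, c, d) => Cantor.to_nat (a, Cantor.to_nat (c, d)) end.
Definition dec3 (N : nat) : nat * nat * nat :=
  let (a, b) := Cantor.of_nat N in let (c, d) := Cantor.of_nat b in (a, c, d).
Lemma dec3_enc3 x : dec3 (enc3 x) = x.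
Proof. destruct x as [[a c] d]. unfold dec3, enc3. rewrite !Cantor.cancel_of_to. reflexivity. Qed.

Section Enc.
Variable K : Type.
Variable iota : nat -> K.
Hypothesis Hiota : forall m n, iota m = iota n -> m = n.

Definition enc (c : nat * nat * nat -> nat -> option ((nat -> K) * (nat -> bool))) (N : nat) : K :=
  let (A, B) := Cantor.of_nat N in
  let (i, n) := Cantor.of_nat A in
  let (sel, p) := Cantor.of_nat B in
  match c (dec3 i) n with
  | None => iota 0
  | Some (a, t) => match sel with 0 => iota 1 | 1 => a p | _ => iota (if t p then 1 else 0)%nat end
  end.

Lemma enc_at c x n sel p :
  enc c (Cantor.to_nat (Cantor.to_nat (enc3 x, n), Cantor.to_nat (sel, p))) =
  match c x n with
  | None => iota 0
  | Some (a, t) => match sel with 0 => iota 1 | 1 => a p | _ => iota (if t p then 1 else 0)%nat end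
  end.
Proof. unfold enc. rewrite !Cantor.cancel_of_to, dec3_enc3. reflexivity. Qed.

Lemma enc_inj c c' : enc c = enc c' -> c = c'.
Proof.
  intro E. apply functional_extensionality; intro x. apply functional_extensionality; intro n.
  assert (Hat : forall sel p, match c x n with
  | None => iota 0
  | Some (a, t) => match sel with 0 => iota 1 | 1 => a p | _ => iota (if t p then 1 else 0)%nat end
  end = match c' x n with
  | None => iota 0
  | Some (a, t) => match sel with 0 => iota 1 | 1 => a p | _ => iota (if t p then 1 else 0)%nat end
  end).
  { intros sel p. rewrite <- !enc_at, E. reflexivity. }
  destruct (c x n) as [[a t]|]; destruct (c' x n) as [[a' t']|];
    try (specialize (Hat 0%nat 0%nat); apply Hiota in Hat; discriminate); auto.
  f_equal. f_equal.
  - apply functional_extensionality; intro p. exact (Hat 1%nat p).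
  - apply functional_extensionality; intro p. specialize (Hat 2%nat p). apply Hiota in Hat.
    destruct (t p), (t' p); auto; discriminate.
Qed.
End Enc.

Lemma image_lindelof (G H : topgroup) : cont_hom_image G H -> lindelof G -> lindelof H.
Proof.
  intros [f [Hc [Hh Hs]]] HL I U HU Hcov.
  destruct (HL I (fun i x => U i (f x))) as [s Hsub].
  - intro i. apply Hc. auto.
  - intro x. apply Hcov.
  - exists s. intro y. destruct (Hs y) as [x <-]. apply Hsub.
Qed.

Lemma image_comp (G H H' : topgroup) : cont_hom_image G H -> cont_hom_image H H' -> cont_hom_image G H'.
Proof.
  intros [f [Hc [Hh Hs]]] [g [Hc' [Hh' Hs']]]. exists (fun x => g (f x)). split; [|split].
  - intros V HV. apply (Hc (fun y => V (g y))). apply Hc'. auto.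
  - intros x y. rewrite Hh, Hh'. reflexivity.
  - intro z. destruct (Hs' z) as [y <-]. destruct (Hs y) as [x <-]. exists x. reflexivity.
Qed.

Lemma part2 (G : topgroup) : lindelof G -> omega_c_moderate G ->
  forall K : Type, pseudochar_le G K ->
      exists i : (G -> R) -> (nat -> K),
        forall f g, cont_real G f -> cont_real G g -> i f = i g -> f = g.
Proof.
  intros HL HM K HK. destruct (weight_bound G HL HM K HK) as [Bas HB].
  destruct HK as [[iota Hiota] _].
  exists (fun f => enc K iota (codeF G _ Bas HB HL f)).
  intros f g Hf Hg E. apply enc_inj in E; auto. apply (codeF_inj G _ Bas HB HL); auto.
Qed.

Theorem theorem3 (G : topgroup) :
  lindelof G -> hausdorff G -> omega_c_moderate G ->
  (* w(G) <= |C(G)| : a base indexed by C(G) *)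
  (exists B : {f : G -> R | cont_real G f} -> G -> Prop,
      is_base G {f : G -> R | cont_real G f} B) /\
  (* |C(G)| <= psi(G)^omega : for every K with psi(G) <= |K|,
     C(G) injects into K^omega *)
  (forall K : Type, pseudochar_le G K ->
      exists i : (G -> R) -> (nat -> K),
        forall f g, cont_real G f -> cont_real G g -> i f = i g -> f = g) /\
  (* G is (tau, tau^omega)-moderate for every infinite tau *)
  (forall T : Type, infinite_type T -> moderate T (nat -> T) G).
Proof.
  intros HL HH HM. split; [apply cozero_base|]. split; [apply part2; auto|].
  intros T HT H HHH Himg Hps.
  assert (HLH : lindelof H) by (apply (image_lindelof G); auto).
  assert (HMH : omega_c_moderate H).
  { intros H' HH' Himg' Hps'. apply HM; auto. apply (image_comp G H H'); auto. }
  destruct (cozero_base H) as [B [HBo HBb]].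
  destruct (part2 H HLH HMH T Hps) as [i Hi].
  exists (fun t y => exists f (hf : cont_real H f), i f = t /\ B (exist _ f hf) y). split.
  - intro t. apply open_of_local. intros y [f [hf [Ht Hy]]].
    exists (B (exist _ f hf)). split; [apply HBo|]. split; auto.
    intros y' Hy'. exists f, hf. auto.
  - intros U y HU Hy. destruct (HBb U y HU Hy) as [[f hf] [Hfy HfU]].
    exists (i f). split.
    + exists f, hf. auto.
    + intros y' [f' [hf' [E Hy']]]. apply Hi in E; auto. subst f'.
      rewrite (proof_irrelevance _ hf' hf) in Hy'. apply HfU. auto.
Qed.
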